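(* For every nonnegative integer $n$ with $v(n)=0$, the directed graph $A(n)$ is a directed path graph.
   Context: A hyperbinary expansion of a nonnegative integer $n$ is a word $x_0\cdots x_k$ over $\{0,1,2\}$ with $x_0\ne0$ and $\sum_i x_i2^{k-i}=n$. The empty word is the unique hyperbinary expansion of $0$. Write $\mathcal H(n)$ for the set of such expansions and $b(n)=|\mathcal H(n)|$. $A(n)$ is the directed graph on $\mathcal H(n)$ with an arc from $\mathbf x02\mathbf y$ to $\mathbf x10\mathbf y$, from $2\mathbf y$ to $10\mathbf y$, and from $\mathbf x12\mathbf y$ to $\mathbf x20\mathbf y$, for arbitrary words $\mathbf x,\mathbf y$ whenever both endpoints lie in $\mathcal H(n)$. $A(n)$ is connected. $v(n)$ denotes the cyclomatic number of $A(n)$: (number of arcs) $-\,b(n)+1$. A directed path graph is a graph whose vertices can be listed $u_0,\dots,u_k$ so that its arcs are exactly $(u_{i-1},u_i)$ for $1\le i\le k$. *)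

(* Defs.v *)
From mathcomp Require Import all_boot all_algebra.
Set Implicit Arguments. Unset Strict Implicit. Unset Printing Implicit Defensive.

(* Words are sequences of naturals; x_0 is the head. *)

Definition wval (w : seq nat) : nat := foldl (fun acc d => 2 * acc + d) 0 w.

Definition hyp (n : nat) (w : seq nat) : bool :=
  [&& all (fun d => d <= 2) w, (w == [::]) || (head 0 w != 0) & wval w == n].

Fixpoint words (k : nat) : seq (seq nat) :=
  if k is k'.+1 then [::] :: [seq d :: w | d <- [:: 0; 1; 2], w <- words k']
  else [:: [::]].

(* H(n): every hyperbinary expansion of n has length <= n
   (x_0 >= 1 forces 2^k <= n), so this lists all of H(n). *)
Definition Hset (n : nat) : seq (seq nat) := [seq w <- words n | hyp n w].

Definition b (n : nat) : nat := size (Hset n).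

(* u = x ++ a ++ y and w = x ++ c ++ y for some words x, y *)
Definition rewr (a c : seq nat) (u w : seq nat) : bool :=
  has (fun i => (u == take i u ++ a ++ drop (i + size a) u) &&
                (w == take i u ++ c ++ drop (i + size a) u))
      (iota 0 (size u).+1).

(* arcs  x02y -> x10y,  2y -> 10y,  x12y -> x20y *)
Definition arc (u w : seq nat) : bool :=
  [|| rewr [:: 0; 2] [:: 1; 0] u w,
      (u == 2 :: behead u) && (w == [:: 1; 0] ++ behead u)
    | rewr [:: 1; 2] [:: 2; 0] u w].

Definition narcs (n : nat) : nat :=
  count (fun p => arc p.1 p.2) [seq (u, w) | u <- Hset n, w <- Hset n].

Definition v (n : nat) : int := (narcs n)%:Z - (b n)%:Z + 1.

Definition is_directed_path_graph (n : nat) : Prop :=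
  exists s : seq (seq nat),
    [/\ uniq s,
        (forall w, (w \in s) = hyp n w) &
        (forall u w, hyp n u -> hyp n w ->
           (arc u w <-> exists i, [/\ i.+1 < size s,
                                     nth [::] s i = u & nth [::] s i.+1 = w]))].

(* Main.v *)
Require Import Defs.
From mathcomp Require Import all_boot all_algebra.
From mathcomp Require Import zify.
Set Implicit Arguments. Unset Strict Implicit.


Section Gen.
Variable T : eqType.

Lemma inT (x y : T) s : x \in s -> x \in y :: s.
Proof. by rewrite in_cons => ->; rewrite orbT. Qed.

Lemma sumn_mapD (S : Type) (f g : S -> nat) (s : seq S) :
  sumn [seq f x + g x | x <- s] = sumn [seq f x | x <- s] + sumn [seq g x | x <- s].
Proof. elim: s => //= x s ->; lia. Qed.

Lemma count_pairs_l (r : rel T) (V1 V2 : seq T) :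
  count (fun p => r p.1 p.2) [seq (u, w) | u <- V1, w <- V2] =
  sumn [seq count (r u) V2 | u <- V1].
Proof.
elim: V1 => //= x V1 IH. rewrite count_cat count_map IH. by [].
Qed.

Lemma count_pairs_r (r : rel T) (V1 V2 : seq T) :
  count (fun p => r p.1 p.2) [seq (u, w) | u <- V1, w <- V2] =
  sumn [seq count (fun u => r u w) V1 | w <- V2].
Proof.
elim: V1 => /= [|x V1 IH].
  by elim: V2 => //.
rewrite count_cat count_map IH /=.
rewrite (sumn_mapD (fun w => (r x w : nat)) (fun w => count (fun u => r u w) V1)). congr (_ + _). clear IH; elim: V2 => //= y V2 ->. by [].
Qed.

Lemma sum_ge_size (f : T -> nat) (q : pred T) (s : seq T) :
  (forall x, x \in s -> q x -> 0 < f x) ->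
  size s <= sumn [seq f x | x <- s] + count (predC q) s.
Proof.
elim: s => //= y s IH H.
have := IH (fun x hx => H x (inT _ hx)).
have := H y (mem_head _ _). case: (q y) => /=; lia.
Qed.

Lemma sum_ge_pt (f : T -> nat) (q : pred T) (s : seq T) x0 :
  x0 \in s -> (forall x, x \in s -> q x -> 0 < f x) ->
  size s + f x0 <= sumn [seq f x | x <- s] + count (predC q) s + 1.
Proof.
elim: s => //= y s IH; rewrite in_cons => /orP[/eqP ->|hx] H.
  have := @sum_ge_size f q s (fun x hx => H x (inT _ hx)). lia.
have := IH hx (fun x hx => H x (inT _ hx)).
have := H y (mem_head _ _). case: (q y) => /=; lia.
Qed.

Lemma count_le1 (p : pred T) (s : seq T) :
  uniq s -> (forall x y, x \in s -> y \in s -> p x -> p y -> x = y) -> count p s <= 1.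
Proof.
elim: s => //= y s IH /andP[ys us] H.
have IH' := IH us (fun x z hx hz => H x z (inT _ hx) (inT _ hz)).
case py: (p y) => //=.
suff -> : count p s = 0 by [].
apply/eqP; rewrite -leqn0 leqNgt -has_count; apply/hasP => -[z zs pz].
have e := H y z (mem_head _ _) (inT _ zs) py pz.
by rewrite e zs in ys.
Qed.

Lemma count_le1_eq (p : pred T) (s : seq T) x y :
  uniq s -> count p s <= 1 -> x \in s -> y \in s -> p x -> p y -> x = y.
Proof.
elim: s => //= z s IH /andP[zs us] Hc.
rewrite !in_cons => /orP[/eqP ->|hx] /orP[/eqP ->|hy] px py //.
- have : 0 < count p s by rewrite -has_count; apply/hasP; exists y.
  move: Hc; rewrite px /=; lia.
- have : 0 < count p s by rewrite -has_count; apply/hasP; exists x.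
  move: Hc; rewrite py /=; lia.
- apply: IH => //. move: Hc; case: (p z) => /=; lia.
Qed.

Lemma deg_le1 (f : T -> nat) (q : pred T) (s : seq T) :
  (forall x, x \in s -> q x -> 0 < f x) -> count (predC q) s <= 1 ->
  sumn [seq f x | x <- s] + 1 = size s -> forall x, x \in s -> f x <= 1.
Proof.
move=> H1 H2 H3 x hx. have := sum_ge_pt hx H1. lia.
Qed.

Lemma exists_min (P : T -> nat) (s : seq T) : s != [::] ->
  exists2 m, m \in s & forall x, x \in s -> P m <= P x.
Proof.
elim: s => //= y s IH _.
case: s IH => [|z s] IH.
  by exists y => [|x]; rewrite ?mem_head // inE => /eqP ->.
have [m ms Hm] := IH isT.
case: (leqP (P y) (P m)) => hym.
  exists y; first exact: mem_head.
  move=> x; rewrite in_cons => /orP[/eqP ->//|/Hm]; lia.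
exists m; first by rewrite in_cons ms orbT.
move=> x; rewrite in_cons => /orP[/eqP ->|/Hm] //; lia.
Qed.

Lemma exists_max (P : T -> nat) (s : seq T) : s != [::] ->
  exists2 m, m \in s & forall x, x \in s -> P x <= P m.
Proof.
elim: s => //= y s IH _.
case: s IH => [|z s] IH.
  by exists y => [|x]; rewrite ?mem_head // inE => /eqP ->.
have [m ms Hm] := IH isT.
case: (leqP (P m) (P y)) => hym.
  exists y; first exact: mem_head.
  move=> x; rewrite in_cons => /orP[/eqP ->//|/Hm]; lia.
exists m; first by rewrite in_cons ms orbT.
move=> x; rewrite in_cons => /orP[/eqP ->|/Hm] //; lia.
Qed.

Definition pairs (s : seq T) := zip s (behead s).

Lemma pairs_nth d (s : seq T) u w :
  (u, w) \in pairs s <-> exists i, [/\ i.+1 < size s, nth d s i = u & nth d s i.+1 = w].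
Proof.
rewrite /pairs; elim: s => [|x t IH] /=.
  by split => // -[i []].
case: t IH => [|y t] IH /=.
  by split => // -[i []].
rewrite in_cons; split.
  case/orP => [/eqP [-> ->]|/IH [i [h1 h2 h3]]].
    by exists 0.
  by exists i.+1.
case=> -[|i] [h1 h2 h3].
  by rewrite -h2 -h3 eqxx.
apply/orP; right; apply/IH; by exists i.
Qed.


Lemma pairs_mem1 (s : seq T) a c : (a, c) \in pairs s -> a \in s.
Proof.
move/(pairs_nth a) => [i [h1 <- _]]. apply: mem_nth. lia.
Qed.

Lemma pairs_mem2 (s : seq T) a c : (a, c) \in pairs s -> c \in s.
Proof.
move/(pairs_nth a) => [i [h1 _ <-]]. by apply: mem_nth.
Qed.

Lemma pairs_cons (m y : T) t : pairs (m :: y :: t) = (m, y) :: pairs (y :: t).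
Proof. by []. Qed.

Lemma pairs_consE d (m : T) s a c : ((a, c) \in pairs (m :: s)) =
  ((a == m) && (s != [::]) && (c == head d s)) || ((a, c) \in pairs s).
Proof. case: s => [|y t]; first by rewrite /pairs /= !in_nil andbF. by rewrite /pairs /= in_cons xpair_eqE andbT. Qed.

Lemma path_lemma (e : rel T) (P : T -> nat) (d : T) : forall n (V : seq T),
 size V = n -> uniq V ->
 (forall u w, u \in V -> w \in V -> e u w -> P u < P w) ->
 (forall u w1 w2, u \in V -> w1 \in V -> w2 \in V -> e u w1 -> e u w2 -> w1 = w2) ->
 (forall u1 u2 w, u1 \in V -> u2 \in V -> w \in V -> e u1 w -> e u2 w -> u1 = u2) ->
 (forall u1 u2, u1 \in V -> u2 \in V -> ~~ has (e u1) V -> ~~ has (e u2) V -> u1 = u2) ->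
 exists s, [/\ uniq s, s =i V &
   forall u w, u \in V -> w \in V -> (e u w <-> (u, w) \in pairs s)].
Proof.
elim=> [|n IH] V hs uV HP Hout Hin Hsink.
  case: V hs uV HP Hout Hin Hsink => // _ _ _ _ _ _.
  by exists [::]; split.
have V0 : V != [::] by move: hs; case: (V).
have [m mV Hm] := exists_min P V0.
set V' := rem m V.
have memV' x : (x \in V') = (x != m) && (x \in V).
  by rewrite /V' (mem_rem_uniq m uV x) inE.
have V'V x : x \in V' -> x \in V by rewrite memV' => /andP[].
have uV' : uniq V' by apply: rem_uniq.
have sV' : size V' = n by rewrite /V' size_rem // hs.
have K1 x : x \in V -> ~~ e x m.
  move=> xV; apply/negP => exm; have := HP _ _ xV mV exm; have := Hm x xV; lia.
have Kmm : ~~ e m m by apply: K1.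
have hasV' x : x \in V' -> ~~ has (e x) V' -> ~~ has (e x) V.
  move=> xV' /hasPn H; apply/hasPn => w wV.
  case: (eqVneq w m) => [->|wm]; first by apply: K1; apply: V'V.
  by apply: H; rewrite memV' wm.
have [s' [us' ms' Hs']] : exists s, [/\ uniq s, s =i V' &
   forall u w, u \in V' -> w \in V' -> (e u w <-> (u, w) \in pairs s)].
  apply: IH => //.
  - move=> u w hu hw; apply: HP; exact: V'V.
  - move=> u w1 w2 hu h1 h2; apply: Hout; exact: V'V.
  - move=> u1 u2 w h1 h2 hw; apply: Hin; exact: V'V.
  - move=> u1 u2 h1 h2 n1 n2; apply: Hsink; try exact: V'V; exact: hasV'.
have ms : m \notin s' by rewrite ms' memV' eqxx.
have K2 : s' != [::] -> e m (head d s').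
  move=> s'0.
  have hm : has (e m) V.
    apply/negP => /negP hm.
    have V'0 : V' != [::].
      have : head d s' \in V'.
        by rewrite -ms'; move: s'0; case: (s') => // y t _; exact: mem_head.
      by case: (V').
    have [x xV' Hx] := exists_max P V'0.
    have hx : ~~ has (e x) V'.
      apply/hasPn => w wV'; apply/negP => exw.
      have := HP _ _ (V'V _ xV') (V'V _ wV') exw; have := Hx w wV'; lia.
    have := Hsink _ _ (V'V _ xV') mV (hasV' _ xV' hx) hm.
    by move=> exm; move: xV'; rewrite memV' exm eqxx.
  case/hasP: hm => w0 w0V ew0.
  have w0m : w0 != m by apply/eqP => h; move: ew0; rewrite h (negbTE Kmm).
  have w0V' : w0 \in V' by rewrite memV' w0m.
  have w0s : w0 \in s' by rewrite ms'.
  have := nth_index d w0s.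
  case eidx: (index w0 s') => [|i].
    by case: (s') s'0 => // y t _ /= ->.
  move=> hw0.
  have hi : i.+1 < size s' by rewrite -eidx index_mem.
  have ps : (nth d s' i, w0) \in pairs s'.
    by apply/(pairs_nth d); exists i; split.
  have niV' : nth d s' i \in V' by rewrite -ms' mem_nth // ltnW.
  have := (Hs' _ _ niV' w0V').2 ps => ein.
  have := Hin _ _ _ (V'V _ niV') mV w0V ein ew0 => eq.
  by move: niV'; rewrite memV' eq eqxx.
exists (m :: s'); split.
- by rewrite /= ms us'.
- move=> x; rewrite in_cons ms' memV'; case: (eqVneq x m) => [->|] //=.
- move=> u w hu hw.
  rewrite (pairs_consE d).
  have hdV : s' != [::] -> head d s' \in V.
    move=> s0; apply: V'V; rewrite -ms'; move: s0; case: (s') => // y t _; exact: mem_head.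
  case: (eqVneq u m) => [->|um].
    rewrite /=.
    have -> : ((m, w) \in pairs s') = false.
      by apply/negbTE/negP => /pairs_mem1; rewrite (negbTE ms).
    rewrite orbF; split.
      move=> emw.
      have wm : w != m by apply/eqP => h; move: emw; rewrite h (negbTE Kmm).
      have ws : w \in s' by rewrite ms' memV' wm hw.
      have s0 : s' != [::] by move: ws; case: (s').
      rewrite s0 /=; apply/eqP; exact: (Hout m w (head d s') mV hw (hdV s0) emw (K2 s0)).
    by case/andP => s0 /eqP ->; exact: K2.
  rewrite /=.
  case: (eqVneq w m) => [->|wm].
    split; first by move=> h; move: (K1 u hu); rewrite h.
    by move/pairs_mem2; rewrite (negbTE ms).
  apply: Hs'; by rewrite memV' ?um ?wm.
Qed.

End Gen.

Definition f2 := (fun acc d => 2 * acc + d).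
Lemma wvalE w : wval w = foldl f2 0 w. Proof. by []. Qed.

Lemma foldl_ge t a : a * 2 ^ (size t) <= foldl f2 a t.
Proof.
elim: t a => [|x t IH] a /=; first by rewrite muln1.
have := IH (f2 a x). rewrite /f2 expnS. nia.
Qed.

Lemma wval_pos w : w != [::] -> head 0 w != 0 -> 0 < wval w.
Proof.
case: w => // d t _ /= hd. rewrite wvalE /=. have := foldl_ge t (f2 0 d).
have : 0 < 2 ^ size t by rewrite expn_gt0.
rewrite /f2. nia.
Qed.

Lemma size_hyp n w : hyp n w -> size w <= n.
Proof.
case/and3P => _ hl /eqP <-. case: w hl => // d t /= hd.
rewrite wvalE /=. have := foldl_ge t (f2 0 d). have := ltn_expl (size t) (isT : 1 < 2).
rewrite /f2. nia.
Qed.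

Lemma words_mem k w : all (fun d => d <= 2) w -> size w <= k -> w \in words k.
Proof.
elim: k w => [|k IH] [|d t] //= /andP[hd ht] hs.
have ht' : t \in words k by apply: IH.
rewrite in_cons /= !mem_cat.
move: hd; case: d => [|[|[|d]]] // _; rewrite (map_f (cons _) ht') ?orbT //.
Qed.

Lemma words_uniq k : uniq (words k).
Proof.
elim: k => //= k IH.
have mi (a : nat) : uniq [seq a :: w | w <- words k] by rewrite map_inj_uniq // => x y [].
have nm (a b : nat) : a != b -> ~~ has (mem [seq a :: w | w <- words k]) [seq b :: w | w <- words k].
  move=> ab; apply/hasPn => z /mapP [y _ ->]; apply/mapP => -[y' _ [e _]].
  by rewrite e eqxx in ab.
rewrite cats0 !mem_cat !cat_uniq !mi has_cat !nm //= andbT.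
apply/andP; split; first by rewrite !negb_or; apply/and3P; split; apply/negP; case/mapP.
by rewrite negb_or; apply/andP; split; apply: nm.
Qed.

Lemma mem_Hset n w : (w \in Hset n) = hyp n w.
Proof.
rewrite mem_filter. case h: (hyp n w) => //=. apply: words_mem; last exact: size_hyp.
by case/and3P: h.
Qed.

Lemma Hset_uniq n : uniq (Hset n).
Proof. apply: filter_uniq; exact: words_uniq. Qed.

Definition g3 := (fun acc d => 3 * acc + d).
Definition Pot w := foldl g3 0 w.

Lemma foldl3_mono t a b : a < b -> foldl g3 a t < foldl g3 b t.
Proof. elim: t a b => //= x t IH a b h; apply: IH; rewrite /g3; lia. Qed.

Lemma rewr_cat a c x y : rewr a c (x ++ a ++ y) (x ++ c ++ y).
Proof.
apply/hasP; exists (size x).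
  rewrite mem_iota /= size_cat; lia.
rewrite take_size_cat // catA drop_size_cat ?size_cat // -catA !eqxx. by [].
Qed.

Lemma rewr_inv a c u w : rewr a c u w -> exists x y, u = x ++ a ++ y /\ w = x ++ c ++ y.
Proof.
case/hasP => i _ /andP[/eqP h1 /eqP h2]. by exists (take i u), (drop (i + size a) u).
Qed.

Lemma Pot_cat x p y : Pot (x ++ p ++ y) = foldl g3 (foldl g3 (Pot x) p) y.
Proof. by rewrite /Pot !foldl_cat. Qed.

Lemma Pot_arc u w : Defs.arc u w -> Pot u < Pot w.
Proof.
case/or3P.
- case/rewr_inv => x [y [-> ->]]. rewrite !Pot_cat; apply: foldl3_mono; rewrite /= /g3; lia.
- case/andP => /eqP hu /eqP ->. rewrite hu /=. rewrite /Pot /=. apply: foldl3_mono. by [].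
- case/rewr_inv => x [y [-> ->]]. rewrite !Pot_cat; apply: foldl3_mono; rewrite /= /g3; lia.
Qed.

Lemma wval_cat x p y : wval (x ++ p ++ y) = foldl f2 (foldl f2 (wval x) p) y.
Proof. by rewrite !wvalE !foldl_cat. Qed.

Lemma hyp_rewr n x p q y : hyp n (x ++ p ++ y) -> all (fun d => d <= 2) q ->
  (x != [::]) || (head 0 q != 0) -> foldl f2 (wval x) p = foldl f2 (wval x) q ->
  hyp n (x ++ q ++ y).
Proof.
case/and3P => ha hl /eqP hv hq hh hf. apply/and3P; split.
- move: ha; rewrite !all_cat hq => /and3P[-> _ ->]. by [].
- case: x hl hh {ha hv hf} => [|d x] /= hl hh; last by move: hl.
  by case: (q) hh => //= e q' ->.
- by rewrite wval_cat -hf -wval_cat hv.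
Qed.

Lemma decomp (u : seq nat) i : i.+1 < size u ->
  u = take i u ++ [:: nth 0 u i; nth 0 u i.+1] ++ drop i.+2 u.
Proof.
move=> h. rewrite -{1}(cat_take_drop i u) (drop_nth 0 (ltnW h)) (drop_nth 0 h). by [].
Qed.

Lemma out_arc n u : hyp n u -> 2 \in u -> has (Defs.arc u) (Hset n).
Proof.
move=> hu h2.
have hj : index 2 u < size u by rewrite index_mem.
have hn := nth_index 0 h2.
case ej: (index 2 u) hj hn => [|i] hj hn.
  case: u hu h2 ej hj hn => // d t hu _ _ _ /= hd; subst d.
  apply/hasP; exists [:: 1, 0 & t].
    rewrite mem_Hset. apply: (@hyp_rewr n [::] [:: 2] [:: 1; 0] t) => //.
  by apply/or3P; apply: Or32; rewrite /= !eqxx.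
have hlt : i < find (pred1 2) u by rewrite -/(index 2 u) ej.
have hne := before_find 0 hlt. rewrite /= in hne.
have hle : nth 0 u i <= 2.
  case/and3P: hu => /allP ha _ _; apply: ha; apply: mem_nth; exact: ltnW hj.
have hdec := decomp hj. rewrite hn in hdec.
move: hdec hle hne; set x := take i u; set y := drop i.+2 u.
case: (nth 0 u i) => [|[|[|d]]] // hdec _ _.
- apply/hasP; exists (x ++ [:: 1; 0] ++ y).
    rewrite mem_Hset. apply: (@hyp_rewr n x [:: 0; 2]) => //.
    + by rewrite -hdec.
    + by rewrite orbT.
    + rewrite /f2 /=; lia.
  apply/or3P; apply: Or31; rewrite {1}hdec; exact: rewr_cat.
- apply/hasP; exists (x ++ [:: 2; 0] ++ y).
    rewrite mem_Hset. apply: (@hyp_rewr n x [:: 1; 2]) => //.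
    + by rewrite -hdec.
    + by rewrite orbT.
    + rewrite /f2 /=; lia.
  apply/or3P; apply: Or33; rewrite {1}hdec; exact: rewr_cat.
Qed.

Lemma in_arc n w : hyp n w -> 0 \in w -> has (fun u => Defs.arc u w) (Hset n).
Proof.
move=> hw h0.
have hj : index 0 w < size w by rewrite index_mem.
have hn := nth_index 0 h0.
case ej: (index 0 w) hj hn => [|i] hj hn.
  case: w hw h0 ej hj hn => // d t hw _ _ _ /= hd; subst d.
  by case/and3P: hw.
have hlt : i < find (pred1 0) w by rewrite -/(index 0 w) ej.
have hne := before_find 0 hlt. rewrite /= in hne.
have hle : nth 0 w i <= 2.
  case/and3P: hw => /allP ha _ _; apply: ha; apply: mem_nth; exact: ltnW hj.
have hdec := decomp hj. rewrite hn in hdec.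
move: hdec hle hne; set x := take i w; set y := drop i.+2 w.
case: (nth 0 w i) => [|[|[|d]]] // hdec _ _.
- case: (eqVneq x [::]) => x0.
    rewrite x0 /= in hdec.
    apply/hasP; exists (2 :: y).
      rewrite mem_Hset. apply: (@hyp_rewr n [::] [:: 1; 0] [:: 2] y) => //.
      by have -> : [::] ++ [:: 1; 0] ++ y = w by rewrite hdec.
    by apply/or3P; apply: Or32; rewrite hdec /= !eqxx.
  apply/hasP; exists (x ++ [:: 0; 2] ++ y).
    rewrite mem_Hset. apply: (@hyp_rewr n x [:: 1; 0]) => //.
    + by rewrite -hdec.
    + by rewrite x0.
    + rewrite /f2 /=; lia.
  apply/or3P; apply: Or31; rewrite hdec; exact: rewr_cat.
- apply/hasP; exists (x ++ [:: 1; 2] ++ y).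
    rewrite mem_Hset. apply: (@hyp_rewr n x [:: 2; 0]) => //.
    + by rewrite -hdec.
    + by rewrite orbT.
    + rewrite /f2 /=; lia.
  apply/or3P; apply: Or33; rewrite hdec; exact: rewr_cat.
Qed.

Definition lnz (w : seq nat) := (w == [::]) || (head 0 w != 0).

Lemma lnz_rcons t d : lnz (rcons t d) -> lnz t.
Proof. by case: t. Qed.

Lemma wval_rcons t d : wval (rcons t d) = 2 * wval t + d.
Proof. by rewrite !wvalE foldl_rcons. Qed.

Lemma wval_pos' t d : lnz (rcons t d) -> 0 < wval (rcons t d).
Proof.
move=> h; apply: wval_pos; first by case: t {h}.
by move: h; rewrite /lnz; case: t.
Qed.

Lemma wval_inj lo w1 w2 : all (fun d => lo <= d <= lo.+1) w1 -> all (fun d => lo <= d <= lo.+1) w2 ->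
  lnz w1 -> lnz w2 -> wval w1 = wval w2 -> w1 = w2.
Proof.
elim/last_ind: w1 w2 => [|t1 d1 IH] w2; case/lastP: w2 => [|t2 d2] //.
- move=> _ _ _ h2 e. have := wval_pos' h2. by rewrite -e.
- move=> _ _ h1 _ e. have := wval_pos' h1. by rewrite e.
rewrite !all_rcons => /andP[hd1 a1] /andP[hd2 a2] l1 l2.
rewrite !wval_rcons => e.
have ed : d1 = d2 by lia.
have et : wval t1 = wval t2 by lia.
by rewrite ed (IH t2 a1 a2 (lnz_rcons l1) (lnz_rcons l2) et).
Qed.

Lemma all01 w : all (fun d => d <= 2) w -> 2 \notin w -> all (fun d => 0 <= d <= 1) w.
Proof.
move=> /allP ha n2; apply/allP => d hd.
have := ha d hd. have : d != 2 by apply: contraNneq n2 => <-.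
by case: d {hd} => [|[|[|]]].
Qed.

Lemma all12 w : all (fun d => d <= 2) w -> 0 \notin w -> all (fun d => 1 <= d <= 2) w.
Proof.
move=> /allP ha n2; apply/allP => d hd.
have := ha d hd. have : d != 0 by apply: contraNneq n2 => <-.
by case: d {hd} => [|[|[|]]].
Qed.

Lemma hyp_uniq lo n x y : hyp n x -> hyp n y ->
  all (fun d => lo <= d <= lo.+1) x -> all (fun d => lo <= d <= lo.+1) y -> x = y.
Proof.
case/and3P => _ lx /eqP vx; case/and3P => _ ly /eqP vy ax ay.
by apply: (wval_inj ax ay lx ly); rewrite vx vy.
Qed.

Theorem mainTheorem6 (n : nat) : v n = 0%R -> is_directed_path_graph n.
Proof.
move=> hv.
have hsum : narcs n + 1 = size (Hset n).
  move: hv; rewrite /v /b. lia.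
set V := Hset n in hsum *.
have uV : uniq V := Hset_uniq n.
have memV w : (w \in V) = hyp n w := mem_Hset n w.
have Hout1 : forall u, u \in V -> count (Defs.arc u) V <= 1.
  apply: (@deg_le1 _ (fun u => count (Defs.arc u) V) (fun u => 2 \in u) V).
  - move=> u hu h2; rewrite -has_count; apply: out_arc => //; by rewrite -memV.
  - apply: count_le1 => // x y hx hy /= nx ny.
    move: hx hy; rewrite !memV => hx hy.
    apply: (@hyp_uniq 0 n) => //; apply: all01 => //.
    + by case/and3P: hx.
    + by case/and3P: hy.
  - by rewrite -count_pairs_l.
have Hin1 : forall w, w \in V -> count (fun u => Defs.arc u w) V <= 1.
  apply: (@deg_le1 _ (fun w => count (fun u => Defs.arc u w) V) (fun w => 0 \in w) V).
  - move=> w hw h0; rewrite -has_count; apply: in_arc => //; by rewrite -memV.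
  - apply: count_le1 => // x y hx hy /= nx ny.
    move: hx hy; rewrite !memV => hx hy.
    apply: (@hyp_uniq 1 n) => //; apply: all12 => //.
    + by case/and3P: hx.
    + by case/and3P: hy.
  - by rewrite -count_pairs_r.
have Hsink : forall u1 u2, u1 \in V -> u2 \in V -> ~~ has (Defs.arc u1) V -> ~~ has (Defs.arc u2) V -> u1 = u2.
  move=> u1 u2 h1 h2 n1 n2.
  have nn : forall u, u \in V -> ~~ has (Defs.arc u) V -> 2 \notin u.
    by move=> u hu nu; apply: contra nu => h2'; apply: out_arc => //; rewrite -memV.
  move: (nn _ h1 n1) (nn _ h2 n2); rewrite !memV in h1 h2 => m1 m2.
  apply: (@hyp_uniq 0 n) => //; apply: all01 => //.
  + by case/and3P: h1.
  + by case/and3P: h2.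
have HP : forall u w, u \in V -> w \in V -> Defs.arc u w -> Pot u < Pot w.
  by move=> u w _ _ h; apply: Pot_arc.
have Hout : forall u w1 w2, u \in V -> w1 \in V -> w2 \in V -> Defs.arc u w1 -> Defs.arc u w2 -> w1 = w2.
  move=> u w1 w2 hu h1 h2 e1 e2.
  exact: (@count_le1_eq _ (Defs.arc u) V w1 w2 uV (Hout1 u hu) h1 h2 e1 e2).
have Hin : forall u1 u2 w, u1 \in V -> u2 \in V -> w \in V -> Defs.arc u1 w -> Defs.arc u2 w -> u1 = u2.
  move=> u1 u2 w h1 h2 hw e1 e2.
  exact: (@count_le1_eq _ (fun u => Defs.arc u w) V u1 u2 uV (Hin1 w hw) h1 h2 e1 e2).
have [s [us ms Hs]] := @path_lemma (seq nat) Defs.arc Pot [::] (size V) V erefl uV HP Hout Hin Hsink.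
exists s; split => //.
  by move=> w; rewrite ms memV.
move=> u w; rewrite -!memV => hu hw.
rewrite (Hs u w hu hw). exact: pairs_nth.
Qed.
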